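(* For $I=1,2$ let $x_I\in\mathbb{R}$, $z_I\in\mathbb{C}$ with $z_2\neq0$, let $\vec r_I=(z_I+\bar z_I,\,-i(z_I-\bar z_I),\,x_I)\in\mathbb{R}^3$, $r_I=|\vec r_I|$, and define $$F=\frac{r_1^2r_2^2-(\vec r_1\cdot\vec r_2)^2}{2r_2|z_2|^2}+\frac{r_2(z_1\bar z_2-z_2\bar z_1)^2}{|z_2|^4},$$ regarded as a function of the independent real variables $x_1,x_2$ and complex variables $z_1,z_2$. Let $K=F-x_1\frac{\partial F}{\partial x_1}-x_2\frac{\partial F}{\partial x_2}$ (equivalently, $K=F-x_1(u_1+\bar u_1)-x_2(u_2+\bar u_2)$ with $\partial F/\partial x_I=u_I+\bar u_I$). Then $$K=-\frac{2\,|\vec r_1\times\vec r_2|^2}{r_2^3}.$$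
   Context: $F$ is the closed-form (residue) evaluation of the generalized Legendre transform function $\frac{1}{2\pi i}\oint\frac{d\zeta}{\zeta}\frac{(\eta_1^{(2)})^2}{\eta_2^{(2)}}$ for the ${\cal O}(2)$ multiplets $\eta^{(2)}_I=\frac{\bar z_I}{\zeta}+x_I-z_I\zeta$; $K$ is the resulting hyperkähler potential of the associated 8-dimensional Swann bundle. *)

(* Defs.v *)
From Stdlib Require Import Reals.
From Coquelicot Require Import Coquelicot.
Open Scope R_scope.

Definition vec3 : Type := (R * R * R)%type.
Definition dot3 (u v : vec3) : R :=
  let '(u1, u2, u3) := u in let '(v1, v2, v3) := v in u1 * v1 + u2 * v2 + u3 * v3.
Definition norm3 (u : vec3) : R := sqrt (dot3 u u).
Definition cross3 (u v : vec3) : vec3 :=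
  let '(u1, u2, u3) := u in let '(v1, v2, v3) := v in
  (u2 * v3 - u3 * v2, u3 * v1 - u1 * v3, u1 * v2 - u2 * v1).

(* r_I = (z_I + conj z_I, -i (z_I - conj z_I), x_I); the first two entries are real
   complex numbers, we take their real parts. *)
Definition rvec (x : R) (z : C) : vec3 :=
  (Re (z + Cconj z), Re ((- Ci) * (z - Cconj z)), x).

(* F(x1,x2,z1,z2).  The complex number (z1 conj z2 - z2 conj z1)^2 is real
   (square of a purely imaginary number); we take its real part. *)
Definition Ffun (x1 x2 : R) (z1 z2 : C) : R :=
  let r1 := norm3 (rvec x1 z1) in
  let r2 := norm3 (rvec x2 z2) in
  let d := dot3 (rvec x1 z1) (rvec x2 z2) in
  (r1 ^ 2 * r2 ^ 2 - d ^ 2) / (2 * r2 * (Cmod z2) ^ 2)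
  + r2 * Re ((z1 * Cconj z2 - z2 * Cconj z1) ^ 2) / (Cmod z2) ^ 4.

Definition Kfun (x1 x2 : R) (z1 z2 : C) : R :=
  Ffun x1 x2 z1 z2
  - x1 * Derive (fun t => Ffun t x2 z1 z2) x1
  - x2 * Derive (fun t => Ffun x1 t z1 z2) x2.

(* Main.v *)
Require Import Defs.
From Stdlib Require Import Reals Lra.
From Coquelicot Require Import Coquelicot.
Open Scope R_scope.

Lemma norm_rvec x a b : norm3 (rvec x (a,b)) = sqrt (4*(a^2+b^2) + x^2).
Proof. unfold norm3, rvec, dot3, Cconj; simpl; f_equal; ring. Qed.
Lemma dot_rvec x a b y c e : dot3 (rvec x (a,b)) (rvec y (c,e)) = 4*(a*c+b*e) + x*y.
Proof. unfold rvec, dot3, Cconj; simpl; ring. Qed.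
Lemma cmod_ab a b : Cmod (a,b) = sqrt (a^2+b^2).
Proof. reflexivity. Qed.
Lemma re_sq a1 b1 a2 b2 : Re (((a1,b1) * Cconj (a2,b2) - (a2,b2) * Cconj (a1,b1)) ^ 2)%C
  = -4*(a1*b2-a2*b1)^2.
Proof. unfold Cconj; simpl; ring. Qed.

Section S.
Variables a1 b1 a2 b2 : R.
Definition m := a2^2+b2^2.
Definition E1 t := 4*(a1^2+b1^2) + t^2.
Definition E2 u := 4*m + u^2.
Definition dd t u := 4*(a1*a2+b1*b2) + t*u.
Definition w := a1*b2-a2*b1.
Definition G t u := (E1 t * E2 u - (dd t u)^2)/(2*sqrt (E2 u)*m) + sqrt (E2 u) * (-4*w^2)/m^2.

Hypothesis hm : 0 < m.
Lemma E2pos u : 0 < E2 u.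
Proof. unfold E2; nra. Qed.

Lemma Ffun_eq t u : Ffun t u (a1,b1) (a2,b2) = G t u.
Proof.
  unfold Ffun, G. rewrite !norm_rvec, dot_rvec, cmod_ab, re_sq.
  assert (h1: 0 <= 4*(a1^2+b1^2) + t^2) by nra.
  assert (h2: 0 <= a2^2+b2^2) by nra.
  assert (h3: 0 <= 4*(a2^2+b2^2) + u^2) by nra.
  rewrite !pow2_sqrt by assumption.
  replace (sqrt (a2^2+b2^2) ^ 4) with ((sqrt (a2^2+b2^2) ^ 2)^2) by ring.
  rewrite pow2_sqrt by assumption. unfold E1, E2, dd, w, m. reflexivity.
Qed.

Lemma D1 t u : Derive (fun t => G t u) t = (2*t*E2 u - 2*dd t u * u)/(2*sqrt(E2 u)*m).
Proof.
  apply is_derive_unique. pose proof (E2pos u) as hE.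
  assert (hs : 0 < sqrt (E2 u)) by (apply sqrt_lt_R0; exact hE).
  unfold G, E1, dd. auto_derive.
  - exact I.
  - field. split; lra.
Qed.

Lemma D2 t u : Derive (fun u => G t u) u =
  ((E1 t*(2*u) - 2*dd t u*t)*(2*sqrt(E2 u)*m) - (E1 t*E2 u - (dd t u)^2)*(2*(u/sqrt(E2 u))*m))/(2*sqrt(E2 u)*m)^2 + (u/sqrt(E2 u))*(-4*w^2)/m^2.
Proof.
  apply is_derive_unique. pose proof (E2pos u) as hE.
  assert (hs : 0 < sqrt (E2 u)) by (apply sqrt_lt_R0; exact hE).
  unfold G, E2, dd. auto_derive.
  - replace (4*m+u*(u*1)) with (E2 u) by (unfold E2; ring). repeat split; try exact I; try lra; nra.
  - replace (4*m+u*(u*1)) with (E2 u) by (unfold E2; ring). fold (E2 u). field. split; lra.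
Qed.
End S.


Lemma cross_eq x1 x2 a1 b1 a2 b2 : norm3 (cross3 (rvec x1 (a1,b1)) (rvec x2 (a2,b2))) ^ 2
  = E1 a1 b1 x1 * E2 a2 b2 x2 - (dd a1 b1 a2 b2 x1 x2)^2.
Proof.
  unfold norm3. rewrite pow2_sqrt.
  - unfold cross3, rvec, dot3, Cconj, E1, E2, dd, m; simpl; ring.
  - unfold cross3, rvec, dot3, Cconj; simpl; repeat apply Rplus_le_le_0_compat; apply Rle_0_sqr.
Qed.

Theorem mainTheorem3 (x1 x2 : R) (z1 z2 : C) (hz2 : z2 <> 0%C) :
  Kfun x1 x2 z1 z2 =
  - (2 * (norm3 (cross3 (rvec x1 z1) (rvec x2 z2))) ^ 2)
    / (norm3 (rvec x2 z2)) ^ 3.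
Proof.
  destruct z1 as [a1 b1], z2 as [a2 b2].
  assert (hm : 0 < m a2 b2).
  { unfold m. destruct (Req_dec a2 0); destruct (Req_dec b2 0).
    - subst. exfalso. apply hz2. reflexivity.
    - nra. - nra. - nra. }
  unfold Kfun. rewrite Ffun_eq by exact hm.
  rewrite (Derive_ext (fun t => Ffun t x2 (a1,b1) (a2,b2)) (fun t => G a1 b1 a2 b2 t x2)) by (intro; apply Ffun_eq; exact hm).
  rewrite (Derive_ext (fun t => Ffun x1 t (a1,b1) (a2,b2)) (fun t => G a1 b1 a2 b2 x1 t)) by (intro; apply Ffun_eq; exact hm).
  rewrite D1, D2 by exact hm.
  rewrite cross_eq, norm_rvec.
  pose proof (E2pos a2 b2 hm x2) as hE.
  assert (hs : 0 < sqrt (E2 a2 b2 x2)) by (apply sqrt_lt_R0; exact hE).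
  assert (hs2 : sqrt (E2 a2 b2 x2) ^ 2 = E2 a2 b2 x2) by (apply pow2_sqrt; lra).
  replace (4 * (a2 ^ 2 + b2 ^ 2) + x2 ^ 2) with (E2 a2 b2 x2) by reflexivity.
  unfold G.
  set (s := sqrt (E2 a2 b2 x2)) in *. clearbody s.
  unfold E2, E1, dd, w in *. 
  assert (hm2 : m a2 b2 <> 0) by lra.
  unfold m in *.
  field_simplify; [ | lra | lra ].
  replace (s^4) with ((s^2)^2) by ring. rewrite hs2.
  field. split; [lra|].
  replace (8 * a2 ^ 4 * s ^ 3 + 16 * a2 ^ 2 * b2 ^ 2 * s ^ 3 + 8 * b2 ^ 4 * s ^ 3) with (8*(a2^2+b2^2)^2*s^3) by ring.
  assert (0 < s^3) by (apply pow_lt; lra).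
  assert (0 < (a2^2+b2^2)^2) by (apply pow_lt; lra).
  nra.
Qed.
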